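(* Let $n\ge2$ and let $G\subsetneq\mathbb{R}^n$ be a domain. Then for all $x,y\in G$, $$\frac{1}{\sqrt2}\,p_G(x,y)\le s_G(x,y)\le\sqrt2\,p_G(x,y),$$ and this inequality is sharp (the constants $1/\sqrt2$ and $\sqrt2$ cannot be improved over all such domains).
   Context: A domain is a non-empty, open, connected set; here it is a proper subset of $\mathbb{R}^n$. $d_G(x)=\inf\{|x-z|:z\in\partial G\}$, $s_G(x,y)=\frac{|x-y|}{\inf_{z\in\partial G}(|x-z|+|z-y|)}$, $p_G(x,y)=\frac{|x-y|}{\sqrt{|x-y|^2+4d_G(x)d_G(y)}}$. *)

(* Defs.v *)
From HB Require Import structures.
From mathcomp Require Import all_boot all_order all_algebra.
From mathcomp Require Import all_classical all_reals all_analysis.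
Set Implicit Arguments. Unset Strict Implicit. Unset Printing Implicit Defensive.
Import Order.TTheory GRing.Theory Num.Theory.
Import numFieldNormedType.Exports.
Local Open Scope classical_set_scope.
Local Open Scope ring_scope.

Section Defs.
Variables (R : realType) (n : nat).

(* Euclidean norm |v| on R^n (MathComp's own norm on matrices is the sup norm). *)
Definition enorm (v : 'rV[R]_n) : R := Num.sqrt (\sum_(i < n) v ord0 i ^+ 2).

(* topological boundary  dG = closure G \ interior G  (product topology = Euclidean topology) *)
Definition bdry (G : set 'rV[R]_n) : set 'rV[R]_n := closure G `\` interior G.

Definition domain (G : set 'rV[R]_n) : Prop :=
  open G /\ connected G /\ G !=set0 /\ G != setT.

Definition dG (G : set 'rV[R]_n) (x : 'rV[R]_n) : R :=
  inf [set enorm (x - z) | z in bdry G].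

Definition sG (G : set 'rV[R]_n) (x y : 'rV[R]_n) : R :=
  enorm (x - y) / inf [set enorm (x - z) + enorm (z - y) | z in bdry G].

Definition pG (G : set 'rV[R]_n) (x y : 'rV[R]_n) : R :=
  enorm (x - y) / Num.sqrt (enorm (x - y) ^+ 2 + 4 * dG G x * dG G y).

End Defs.

(* Main.v *)
Require Import Defs.
From HB Require Import structures.
From mathcomp Require Import all_boot all_order all_algebra.
From mathcomp Require Import all_classical all_reals all_analysis.
From mathcomp Require Import ring lra.
Import Order.TTheory GRing.Theory Num.Theory.
Import numFieldNormedType.Exports.
Local Open Scope classical_set_scope.
Local Open Scope ring_scope.

Set Implicit Arguments. Unset Strict Implicit.
Section S.
Variables (R : realType) (n : nat).
Lemma CS (a b : 'I_n -> R) :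
  (\sum_i a i * b i) ^+ 2 <= (\sum_i a i ^+ 2) * (\sum_i b i ^+ 2).
Proof.
set S := \sum_i a i * b i; set A := \sum_i a i ^+ 2; set B := \sum_i b i ^+ 2.
have B0 : 0 <= B by apply: sumr_ge0 => i _; exact: sqr_ge0.
have A0 : 0 <= A by apply: sumr_ge0 => i _; exact: sqr_ge0.
have [Bz|Bp] := eqVneq B 0.
  have bz : forall i, b i = 0.
    move=> i; apply/eqP; rewrite -sqrf_eq0; apply/eqP.
    move/eqP: Bz; rewrite psumr_eq0 => [/allP/(_ i (mem_index_enum _))/implyP/(_ isT)/eqP //|j _].
    exact: sqr_ge0.
  have -> : S = 0 by rewrite /S big1 // => i _; rewrite bz mulr0.
  by rewrite expr0n /= Bz mulr0.
have Bpos : 0 < B by rewrite lt_def Bp B0.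
have H : 0 <= \sum_i (a i * B - b i * S) ^+ 2 by apply: sumr_ge0 => i _; exact: sqr_ge0.
have E : \sum_i (a i * B - b i * S) ^+ 2 = B * (A * B - S ^+ 2).
  transitivity (\sum_i (B ^+ 2 * a i ^+ 2 - (2 * B * S) * (a i * b i) + S ^+ 2 * b i ^+ 2)).
    by apply: eq_bigr => i _; ring.
  rewrite !big_split /= sumrN -!mulr_sumr -/A -/B -/S; ring.
rewrite E in H.
have : 0 <= A * B - S ^+ 2 by rewrite -(pmulr_rge0 _ Bpos).
lra.
Qed.
End S.

Section S.
Variables (R : realType) (n : nat).
Implicit Types u v : 'rV[R]_n.
Lemma enorm_ge0 u : 0 <= enorm u.
Proof. exact: sqrtr_ge0. Qed.
Lemma enormN u : enorm (- u) = enorm u.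
Proof. by rewrite /enorm; congr Num.sqrt; apply: eq_bigr => i _; rewrite mxE sqrrN. Qed.
Lemma enormB u v : enorm (u - v) = enorm (v - u).
Proof. by rewrite -enormN opprB. Qed.
Lemma enormD u v : enorm (u + v) <= enorm u + enorm v.
Proof.
rewrite /enorm.
set A := \sum_i u ord0 i ^+ 2; set B := \sum_i v ord0 i ^+ 2.
set S := \sum_i u ord0 i * v ord0 i.
have A0 : 0 <= A by apply: sumr_ge0 => i _; exact: sqr_ge0.
have B0 : 0 <= B by apply: sumr_ge0 => i _; exact: sqr_ge0.
have hS : S ^+ 2 <= A * B := @CS R n (fun i => u ord0 i) (fun i => v ord0 i).
have E : \sum_i (u + v) ord0 i ^+ 2 = A + 2 * S + B.
  transitivity (\sum_i (u ord0 i ^+ 2 + 2 * (u ord0 i * v ord0 i) + v ord0 i ^+ 2)).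
    by apply: eq_bigr => i _; rewrite mxE; ring.
  by rewrite !big_split /= -mulr_sumr.
rewrite E.
have sA := sqrtr_ge0 A; have sB := sqrtr_ge0 B.
have eA := sqr_sqrtr A0; have eB := sqr_sqrtr B0.
have hS2 : S <= Num.sqrt A * Num.sqrt B.
  have : S ^+ 2 <= (Num.sqrt A * Num.sqrt B) ^+ 2 by rewrite exprMn eA eB.
  have := mulr_ge0 sA sB; nra.
rewrite -[X in _ <= X]ger0_norm ?addr_ge0 // -sqrtr_sqr.
apply: ler_wsqrtr; nra.
Qed.
Lemma enorm_tri (x y z : 'rV[R]_n) : enorm (x - y) <= enorm (x - z) + enorm (z - y).
Proof. by have := enormD (x - z) (z - y); rewrite addrA subrK. Qed.
End S.

Section S.
Variables (R : realType) (n : nat).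
Implicit Types u v : 'rV[R]_n.

Lemma infP (B : set 'rV[R]_n) (f : 'rV[R]_n -> R) : (forall z, 0 <= f z) -> B !=set0 ->
  [/\ 0 <= inf (f @` B), (forall z, B z -> inf (f @` B) <= f z) &
     (forall e, 0 < e -> exists2 z, B z & f z < inf (f @` B) + e)].
Proof.
move=> f0 [z0 Bz0].
have ne : (f @` B) !=set0 by exists (f z0), z0.
have lb : has_lbound (f @` B) by exists 0 => _ [z _ <-].
split.
- by apply: lb_le_inf => // _ [z _ <-].
- by move=> z Bz; apply: ge_inf => //; exists z.
- move=> e e0; have [_ [z Bz <-] lt] := inf_adherent e0 (conj ne lb).
  by exists z.
Qed.

Lemma frac_le (t a b : R) : 0 <= t -> 0 < a -> a <= b -> t / b <= t / a.
Proof.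
move=> t0 a0 ab; apply: ler_wpM2l => //.
by rewrite lef_pV2 // posrE (lt_le_trans a0 ab).
Qed.

Lemma main_ineq (G : set 'rV[R]_n) x y : bdry G !=set0 ->
  (Num.sqrt 2)^-1 * pG G x y <= sG G x y /\ sG G x y <= Num.sqrt 2 * pG G x y.
Proof.
move=> Bne; rewrite /pG /sG /dG.
set t := enorm (x - y).
have [dx0 dxle dxap] := @infP _ (fun z => enorm (x - z)) (fun z => @enorm_ge0 R n _) Bne.
have [dy0 dyle dyap] := @infP _ (fun z => enorm (y - z)) (fun z => @enorm_ge0 R n _) Bne.
set dx := inf _ in dx0 dxle dxap.
set dy := inf _ in dy0 dyle dyap.
have [m0 mle map] := @infP _ (fun z => enorm (x - z) + enorm (z - y))
   (fun z => addr_ge0 (@enorm_ge0 R n _) (@enorm_ge0 R n _)) Bne.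
set m := inf _ in m0 mle map *.
have t0 : 0 <= t by exact: (@enorm_ge0 R n).
have [z0 Bz0] := Bne.
have mt : t <= m.
  apply: lb_le_inf; first by exists (enorm (x - z0) + enorm (z0 - y)), z0.
  by move=> _ [z _ <-]; exact: enorm_tri.
have mdd : dx + dy <= m.
  apply: lb_le_inf; first by exists (enorm (x - z0) + enorm (z0 - y)), z0.
  move=> _ [z Bz <-]; apply: lerD; first exact: dxle.
  by rewrite enormB; exact: dyle.
have mx : m <= t + 2 * dx.
  apply/ler_addgt0Pr => e e0.
  have [z Bz hz] := dxap (e / 2) (divr_gt0 e0 (ltr0Sn _ 1)).
  have := mle z Bz; have := enorm_tri z y x; rewrite -/t (enormB z x).
  lra.
have my : m <= t + 2 * dy.
  apply/ler_addgt0Pr => e e0.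
  have [z Bz hz] := dyap (e / 2) (divr_gt0 e0 (ltr0Sn _ 1)).
  have := mle z Bz; have := enorm_tri x z y; rewrite -/t (enormB z y).
  lra.
have [->|tp] := eqVneq t 0.
  by rewrite !mul0r !mulr0.
have tpos : 0 < t by rewrite lt_def tp t0.
have mpos : 0 < m := lt_le_trans tpos mt.
set Q := t ^+ 2 + 4 * dx * dy.
have Q0 : 0 <= Q by rewrite /Q; have := mulr_ge0 dx0 dy0; nra.
have Ppos : 0 < Num.sqrt Q by rewrite sqrtr_gt0 /Q; have := mulr_ge0 dx0 dy0; nra.
have s2 : 0 < Num.sqrt 2 :> R by rewrite sqrtr_gt0.
split.
- have -> : (Num.sqrt 2)^-1 * (t / Num.sqrt Q) = t / (Num.sqrt 2 * Num.sqrt Q).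
    by field; rewrite !gt_eqF.
  apply: frac_le => //.
  rewrite -sqrtrM // -(ger0_norm (ltW mpos)) -sqrtr_sqr.
  apply: ler_wsqrtr; rewrite /Q.
  have := mulr_ge0 dx0 dy0.
  have [hxy|hxy] := lerP dx dy.
    have : m ^+ 2 <= (t + 2 * dx) ^+ 2 by rewrite ler_sqr ?nnegrE //; lra.
    have h1 : 0 <= dy - dx by lra. have := mulr_ge0 dx0 h1; have := sqr_ge0 (t - 2 * dx); nra.
  have : m ^+ 2 <= (t + 2 * dy) ^+ 2 by rewrite ler_sqr ?nnegrE //; lra.
  have h1 : 0 <= dx - dy by lra. have := mulr_ge0 dy0 h1; have := sqr_ge0 (t - 2 * dy); nra.
- have -> : Num.sqrt 2 * (t / Num.sqrt Q) = t / (Num.sqrt Q / Num.sqrt 2).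
    by field; rewrite !gt_eqF.
  apply: frac_le => //; first by rewrite divr_gt0.
  rewrite ler_pdivrMr // -(ger0_norm (ltW mpos)) -sqrtr_sqr -sqrtrM ?sqr_ge0 //; apply: ler_wsqrtr; rewrite /Q.
  have : m ^+ 2 >= t ^+ 2 by rewrite ler_sqr ?nnegrE //; lra.
  have : m ^+ 2 >= (dx + dy) ^+ 2 by rewrite ler_sqr ?nnegrE //; lra.
  have := sqr_ge0 (dx - dy); nra.
Qed.
End S.

Section S.
Variables (R : realType) (n : nat).
Implicit Types u v : 'rV[R]_n.

Definition lin u v (s : R) : 'rV[R]_n := u + s *: v.

Lemma lin_cont u v : continuous (lin u v).
Proof.
move=> s; rewrite /lin.
apply: cvgD; first exact: cvg_cst.
exact: cvgZr_tmp.
Qed.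

Definition seg u w := lin u (w - u) @` `[0, 1].

Lemma seg_connected u w : connected (seg u w).
Proof.
apply: connected_continuous_connected; first exact: segment_connected.
apply: continuous_subspaceT => s; exact: lin_cont.
Qed.

Lemma seg0 u w : seg u w u.
Proof. by exists 0; [rewrite /= in_itv /= lexx ler01 | rewrite /lin scale0r addr0]. Qed.
Lemma seg1 u w : seg u w w.
Proof. by exists 1; [rewrite /= in_itv /= lexx ler01 | rewrite /lin scale1r addrC subrK]. Qed.

Lemma bdry_ne (G : set 'rV[R]_n) : domain G -> bdry G !=set0.
Proof.
move=> [oG [_ [[a Ga] /setTPn [b nGb]]]].
apply: contrapT => hB.
have cG : closed G.
  apply/closure_id/seteqP; split; first exact: subset_closure.
  move=> p cp; apply: contrapT => nGp; apply: hB; exists p; split => //.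
  by move/interior_subset.
have E : seg a b `&` G = seg a b.
  apply: (@seg_connected a b).
  - by exists a; split => //; exact: seg0.
  - by exists G.
  - by exists G.
by have := seg1 a b; rewrite -E => -[].
Qed.

Lemma part1 (G : set 'rV[R]_n) : domain G -> forall x y, G x -> G y ->
      (Num.sqrt 2)^-1 * pG G x y <= sG G x y /\ sG G x y <= Num.sqrt 2 * pG G x y.
Proof. by move=> dG x y _ _; apply: main_ineq; exact: bdry_ne. Qed.

End S.

Section S.
Variables (R : realType) (k : nat).
Local Notation V := 'rV[R]_k.+2.
Definition i0 : 'I_k.+2 := ord0.
Definition i1 : 'I_k.+2 := Ordinal (isT : 1 < k.+2)%N.
Definition ve (c : R) : V := \row_j (if j == i0 then c else 0).
Definition we (c : R) : V := \row_j (if j == i1 then c else 0).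
Definition G0 : set V := [set p | p <> ve 0 /\ p <> ve 4].

Lemma i10 : (i1 == i0) = false. Proof. by []. Qed.
Lemma i01 : (i0 == i1) = false. Proof. by []. Qed.

Lemma veB a b : ve a - ve b = ve (a - b).
Proof. by apply/rowP => j; rewrite !mxE; case: ifP => _; rewrite ?subr0. Qed.

Lemma enorm_ve c : enorm (ve c) = `|c|.
Proof.
rewrite /enorm (bigD1 i0) //= big1 ?addr0; last first.
  by move=> j /negbTE hj; rewrite !mxE hj expr0n.
by rewrite !mxE eqxx sqrtr_sqr.
Qed.

Lemma ve_inj a b : ve a = ve b -> a = b.
Proof. by move/(congr1 (fun p : V => p ord0 i0)); rewrite !mxE eqxx. Qed.

Lemma inG0 (p : V) : p ord0 i1 != 0 \/ p ord0 i0 < 0 -> G0 p.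
Proof.
move=> h; split => hp; rewrite hp !mxE ?i10 ?eqxx in h; case: h => //= h.
- by rewrite ltxx in h.
- by have : (0 : R) < 4 by []; lra. 
Qed.

Lemma G0_ve c : c <> 0 -> c <> 4 -> G0 (ve c).
Proof. by move=> h1 h2; split => /ve_inj. Qed.

Lemma G0_open : open G0.
Proof.
have -> : G0 = ~` ([set ve 0] `|` [set ve 4]).
  by apply/seteqP; split => p /=; [move=> [h1 h2] [] | move/not_orP].
apply: closed_openC; apply: closedU;
  exact/accessible_closed_set1/hausdorff_accessible/norm_hausdorff.
Qed.


Lemma G0_closure c : closure G0 (ve c).
Proof.
move=> B hB.
have cl := @lin_cont R k.+2 (ve c) (we 1) 0.
have e0 : lin (ve c) (we 1) 0 = ve c by rewrite /lin scale0r addr0.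
rewrite -e0 in hB.
have /nbhs_ballP [e ep He] := cl B hB.
have ep2 : 0 < e := ep.
have hb : ball (0 : R) e (e / 2).
  rewrite /ball /= sub0r normrN ger0_norm; last by lra.
  lra.
exists (lin (ve c) (we 1) (e / 2)); split; last exact: He.
apply: inG0; left; rewrite /lin !mxE i10 eqxx add0r mulr1.
by rewrite gt_eqF //; lra.
Qed.

Lemma bdry_G0 : bdry G0 = [set p | p = ve 0 \/ p = ve 4].
Proof.
apply/seteqP; split => p.
  move=> [_ nip]; apply: contrapT => /not_orP [h1 h2]; apply: nip.
  by move/interior_id: G0_open => ->; split.
move=> hp; split.
  by case: hp => ->; exact: G0_closure.
by move/interior_subset => [h1 h2]; case: hp.
Qed.

Lemma inf2 (f : V -> R) a b :
  inf [set f z | z in [set p | p = a \/ p = b]] = Order.min (f a) (f b).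
Proof.
have ne : [set f z | z in [set p | p = a \/ p = b]] !=set0.
  by exists (f a), a => //; left.
have lb : lbound [set f z | z in [set p | p = a \/ p = b]] (Order.min (f a) (f b)).
  by move=> _ [z [->|->] <-]; rewrite ?ge_min lexx ?orbT.
apply/le_anti/andP; split; last exact: lb_le_inf.
have hl : has_lbound [set f z | z in [set p | p = a \/ p = b]] by exists (Order.min (f a) (f b)).
rewrite le_min; apply/andP; split; apply: ge_inf => //.
- by exists a => //; left.
- by exists b => //; right.
Qed.
End S.

Section S.
Variables (R : realType) (k : nat).
Local Notation V := 'rV[R]_k.+2.
Local Notation ve := (@ve R k).
Local Notation we := (@we R k).
Local Notation G0 := (@G0 R k).

Lemma seg_sub (u w : V) : (forall s, 0 <= s -> s <= 1 -> G0 (lin u (w - u) s)) -> seg u w `<=` G0.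
Proof. by move=> h _ [s hs <-]; move: hs; rewrite /= in_itv /= => /andP[]; exact: h. Qed.

Lemma linE (u d : V) s j : lin u d s ord0 j = u ord0 j + s * d ord0 j.
Proof. by rewrite /lin !mxE. Qed.

Definition cp (p : V) : R := if 0 <= p ord0 (i1 k) then 1 else -1.
Definition K0 : set V := seg (we (-1)) (ve (-1)) `|` seg (ve (-1)) (we 1).
Definition Cp (p : V) : set V :=
  seg p (p + we (cp p)) `|` (seg (p + we (cp p)) (we (cp p)) `|` K0).

Lemma K0_connected : connected K0.
Proof.
apply: connectedU; last 2 first; [exact: seg_connected | exact: seg_connected |].
by exists (ve (-1)); split; [exact: seg1 | exact: seg0].
Qed.

Lemma K0_we p : K0 (we (cp p)).
Proof. by rewrite /cp; case: ifP => _; [right; exact: seg1 | left; exact: seg0]. Qed.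

Lemma Cp_connected p : connected (Cp p).
Proof.
apply: connectedU; last 2 first; [exact: seg_connected | |].
  apply: connectedU; last 2 first; [exact: seg_connected | exact: K0_connected |].
  by exists (we (cp p)); split; [exact: seg1 | exact: K0_we].
by exists (p + we (cp p)); split; [exact: seg1 | left; exact: seg0].
Qed.

Lemma Cp_sub p : G0 p -> Cp p `<=` G0.
Proof.
move=> Gp.
have ent : forall c j, we c ord0 j = if j == i1 k then c else 0 by move=> c j; rewrite !mxE.
have env : forall c j, ve c ord0 j = if j == i0 k then c else 0 by move=> c j; rewrite !mxE.
rewrite /Cp /K0 !subUset; split; [|split; [|split]].
- apply: seg_sub => s s0 s1.
  have -> : p + we (cp p) - p = we (cp p) by rewrite addrAC subrr add0r.
  have [->|sp] := eqVneq s 0; first by rewrite /lin scale0r addr0.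
  have spos : 0 < s by rewrite lt_def sp s0.
  apply: inG0; left; rewrite linE ent eqxx /cp.
  by case: ifP => h; [rewrite gt_eqF // | rewrite lt_eqF //]; lra.
- apply: seg_sub => s s0 s1.
  apply: inG0; left; rewrite linE !mxE eqxx /cp.
  case: ifP => h.
    rewrite gt_eqF //; have : s * (p ord0 (i1 k) + 1) <= p ord0 (i1 k) + 1 by nra. nra.
  rewrite lt_eqF //; have : s * (p ord0 (i1 k) - 1) >= p ord0 (i1 k) - 1 by nra. nra.
- apply: seg_sub => s s0 s1.
  have [->|sp] := eqVneq s 0.
    by apply: inG0; left; rewrite linE ent eqxx mul0r addr0 oppr_eq0 oner_eq0.
  have spos : 0 < s by rewrite lt_def sp s0.
  apply: inG0; right; rewrite linE !mxE eqxx i01; lra.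
- apply: seg_sub => s s0 s1.
  have [->|sp] := eqVneq s 0.
    by apply: inG0; right; rewrite linE env eqxx mul0r addr0; lra.
  have spos : 0 < s by rewrite lt_def sp s0.
  apply: inG0; left; rewrite linE !mxE eqxx i10 gt_eqF //; lra.
Qed.

Lemma G0_connected : connected G0.
Proof.
have -> : G0 = \bigcup_(p in G0) Cp p.
  apply/seteqP; split => [p Gp|q [p Gp]]; last exact: Cp_sub.
  by exists p => //; left; exact: seg0.
apply: bigcup_connected; last by move=> p _; exact: Cp_connected.
by exists (we 1) => p _; right; right; right; exact: seg1.
Qed.

End S.

Section S.
Variables (R : realType) (k : nat).
Local Notation V := 'rV[R]_k.+2.
Local Notation ve := (@ve R k).
Local Notation we := (@we R k).
Local Notation G0 := (@G0 R k).

Lemma G0_domain : domain G0.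
Proof.
split; first exact: G0_open.
split; first exact: G0_connected.
split.
  exists (we 1); apply: inG0; left; rewrite !mxE eqxx; exact: oner_neq0.
by apply/setTPn; exists (ve 0) => -[].
Qed.

Lemma dG_ve c : dG G0 (ve c) = Order.min `|c - 0| `|c - 4|.
Proof. by rewrite /dG bdry_G0 inf2 !veB !enorm_ve. Qed.

Lemma sG_ve a b : sG G0 (ve a) (ve b) =
  `|a - b| / Order.min (`|a - 0| + `|0 - b|) (`|a - 4| + `|4 - b|).
Proof.
by rewrite /sG bdry_G0 (inf2 (fun z => enorm (ve a - z) + enorm (z - ve b))) !veB !enorm_ve.
Qed.

Lemma pG_ve a b : pG G0 (ve a) (ve b) =
  `|a - b| / Num.sqrt (`|a - b| ^+ 2 + 4 * Order.min `|a - 0| `|a - 4| * Order.min `|b - 0| `|b - 4|).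
Proof. by rewrite /pG !dG_ve veB enorm_ve. Qed.

Lemma normp (c d : R) : 0 <= c -> c = d -> `|c| = d.
Proof. by move=> h <-; rewrite ger0_norm. Qed.
Lemma normn (c d : R) : c <= 0 -> - c = d -> `|c| = d.
Proof. by move=> h <-; rewrite ler0_norm. Qed.

Lemma sqrt8 : Num.sqrt (2 ^+ 2 + 4 * 1 * 1 : R) = 2 * Num.sqrt 2.
Proof.
rewrite (_ : 2 ^+ 2 + 4 * 1 * 1 = 2 ^+ 2 * 2 :> R); last by ring.
by rewrite sqrtrM ?sqr_ge0 // sqrtr_sqr ger0_norm.
Qed.

Lemma part2 c : (forall (G : set V), domain G -> forall x y, G x -> G y ->
          c * pG G x y <= sG G x y) -> c <= (Num.sqrt 2)^-1.
Proof.
move=> H.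
have := H G0 G0_domain (ve 1) (ve 3).
rewrite pG_ve sG_ve.
rewrite (@normn (1 - 3) 2); try lra.
rewrite (@normp (1 - 0) 1); try lra.
rewrite (@normn (1 - 4) 3); try lra.
rewrite (@normp (3 - 0) 3); try lra.
rewrite (@normn (3 - 4) 1); try lra.
rewrite (@normn (0 - 3) 3); try lra.
rewrite (@normp (4 - 3) 1); try lra.
have m1 : Num.min (1:R) 3 = 1 by rewrite min_l //; lra.
have m2 : Num.min (3:R) 1 = 1 by rewrite min_r //; lra.
have m3 : Num.min (1 + 3 : R) (3 + 1) = 4 by rewrite min_l //; lra.
rewrite m1 m2 m3 sqrt8.
have g1 : G0 (ve 1) by apply: G0_ve => h; lra.
have g3 : G0 (ve 3) by apply: G0_ve => h; lra.
move=> /(_ g1 g3).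
have r0 : 0 < Num.sqrt 2 :> R by rewrite sqrtr_gt0.
have r2 : Num.sqrt 2 * Num.sqrt 2 = 2 :> R by rewrite -expr2 sqr_sqrtr.
set r := Num.sqrt 2 in r0 r2 *.
have ri : r^-1 = r / 2 by rewrite -r2 invfM mulrA mulfV ?mul1r // gt_eqF.
have -> : c * (2 / (2 * r)) = c / r by field; rewrite gt_eqF.
move=> h; rewrite ri; rewrite ler_pdivrMr // in h; lra.
Qed.

Lemma part3 c : (forall (G : set V), domain G -> forall x y, G x -> G y ->
          sG G x y <= c * pG G x y) -> Num.sqrt 2 <= c.
Proof.
move=> H.
have g1 : G0 (ve (-1)) by apply: G0_ve => h; lra.
have g3 : G0 (ve 1) by apply: G0_ve => h; lra.
have := H G0 G0_domain (ve (-1)) (ve 1) g1 g3.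
rewrite pG_ve sG_ve.
rewrite (@normn (-1 - 1) 2); try lra.
rewrite (@normn (-1 - 0) 1); try lra.
rewrite (@normn (-1 - 4) 5); try lra.
rewrite (@normp (1 - 0) 1); try lra.
rewrite (@normn (1 - 4) 3); try lra.
rewrite (@normn (0 - 1) 1); try lra.
rewrite (@normp (4 - 1) 3); try lra.
have m1 : Num.min (1:R) 5 = 1 by rewrite min_l //; lra.
have m2 : Num.min (1:R) 3 = 1 by rewrite min_l //; lra.
have m3 : Num.min (1 + 1 : R) (5 + 3) = 2 by rewrite min_l //; lra.
rewrite m1 m2 m3 sqrt8.
have r0 : 0 < Num.sqrt 2 :> R by rewrite sqrtr_gt0.
set r := Num.sqrt 2 in r0 *.
have -> : c * (2 / (2 * r)) = c / r by field; rewrite gt_eqF.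
rewrite divff ?(oner_neq0, pnatr_eq0) // ler_pdivlMr //; lra.
Qed.
End S.

Unset Implicit Arguments. Set Strict Implicit.

Theorem theorem3p5 (R : realType) (n : nat) (hn : (2 <= n)%N) :
  (* the inequality *)
  (forall (G : set 'rV[R]_n), domain G -> forall x y, G x -> G y ->
      (Num.sqrt 2)^-1 * pG G x y <= sG G x y /\ sG G x y <= Num.sqrt 2 * pG G x y)
  /\
  (* sharpness of the lower constant 1/sqrt 2 *)
  (forall c : R,
      (forall (G : set 'rV[R]_n), domain G -> forall x y, G x -> G y ->
          c * pG G x y <= sG G x y) -> c <= (Num.sqrt 2)^-1)
  /\
  (* sharpness of the upper constant sqrt 2 *)
  (forall c : R,
      (forall (G : set 'rV[R]_n), domain G -> forall x y, G x -> G y ->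
          sG G x y <= c * pG G x y) -> Num.sqrt 2 <= c).
Proof.
case: n hn => [|[|k]] // hn.
split; first exact: part1.
split; [exact: part2 | exact: part3].
Qed.
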